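(* Let $D$ be a division ring with center $F$ such that $D$ is algebraic over $F$. Then $D$ has no maximal subrings if and only if $D=F$ is a field without maximal subrings.
   Context: All rings are associative unital and subrings share the identity. A maximal subring of a ring $T$ is a proper subring maximal under inclusion among proper subrings of $T$. *)

(* Defs.v *)
From mathcomp Require Import all_boot all_algebra.
Set Implicit Arguments. Unset Strict Implicit. Unset Printing Implicit Defensive.
Import GRing.Theory.
Local Open Scope ring_scope.

Definition is_division_ring (D : unitRingType) : Prop :=
  forall x : D, x != 0 -> x \is a GRing.unit.

Definition central (R : pzRingType) (x : R) : Prop := forall y : R, x * y = y * x.

Definition algebraic_over_center (R : nzRingType) : Prop :=
  forall x : R, exists p : {poly R},
    p != 0 /\ (forall i, central p`_i) /\ p.[x] = 0.

Definition is_subring (R : pzRingType) (S : R -> Prop) : Prop :=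
  [/\ S 1,
      (forall x y, S x -> S y -> S (x - y)) &
      (forall x y, S x -> S y -> S (x * y))].

Definition proper_subring (R : pzRingType) (S : R -> Prop) : Prop :=
  is_subring S /\ exists x : R, ~ S x.

Definition maximal_subring (R : pzRingType) (S : R -> Prop) : Prop :=
  proper_subring S /\
  forall T : R -> Prop, proper_subring T -> (forall x, S x -> T x) ->
    forall x, T x -> S x.

Definition has_no_maximal_subrings (R : pzRingType) : Prop :=
  ~ exists S : R -> Prop, maximal_subring S.

(* Main.v *)
Require Import Defs.
From mathcomp Require Import all_boot all_algebra.
From Stdlib Require Import Classical.
From mathcomp Require Import zify.
Set Implicit Arguments. Unset Strict Implicit. Unset Printing Implicit Defensive.
Import GRing.Theory.
Local Open Scope ring_scope.

Section LA.
Variable D : unitRingType.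
Hypothesis divD : is_division_ring D.
Variable I : finType.

Lemma sum_ind_at (F : I -> D) (i0 : I) (t : D) :
  \sum_i F i * (if i == i0 then t else 0) = F i0 * t.
Proof.
rewrite (bigD1 i0) //= eqxx big1 ?addr0 // => i /negPf ->; by rewrite mulr0.
Qed.

Lemma solve_hom N : forall (f : nat -> I -> D) (S : {set I}), (N < #|S|)%N ->
  exists c : I -> D, (exists i, c i != 0) /\ (forall i, i \notin S -> c i = 0) /\
    (forall j, (j < N)%N -> \sum_i f j i * c i = 0).
Proof.
elim: N => [|N IH] f S hS.
  case/card_gt0P: hS => i0 Hi0.
  exists (fun i => if i == i0 then 1 else 0); split; first by exists i0; rewrite eqxx oner_neq0.
  split=> // i Hi; case: eqP => // E; by rewrite E Hi0 in Hi.
case: (boolP [exists i in S, f 0%N i != 0]).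
  case/existsP => i0 /andP [Hi0 Hr].
  have Ur := divD Hr.
  set r := f 0%N i0 in Hr Ur.
  pose g j i := f j.+1 i - f j.+1 i0 * r^-1 * f 0%N i.
  have hS' : (N < #|S :\ i0|)%N.
    by move: hS; rewrite (cardsD1 i0) Hi0.
  have [c' [[i1 Hi1] [Hsupp Heq]]] := IH g _ hS'.
  have c'i0 : c' i0 = 0 by apply: Hsupp; rewrite setD11.
  pose s := \sum_i f 0%N i * c' i.
  pose t := - (r^-1 * s).
  exists (fun i => c' i + (if i == i0 then t else 0)); split.
    exists i1; case: (i1 =P i0) => [E|_] /=; last by rewrite addr0.
    by rewrite E c'i0 eqxx in Hi1.
  split.
    move=> i Hi; case: (i =P i0) => [E|_] /=; first by rewrite E Hi0 in Hi.
    rewrite addr0; apply: Hsupp; by rewrite in_setD1 (negPf Hi) andbF.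
  move=> j Hj.
  under eq_bigr do rewrite mulrDr.
  rewrite big_split /= sum_ind_at.
  case: j Hj => [|j] Hj.
    rewrite /t mulrN mulrA mulrV // mul1r subrr //.
  have H := Heq j Hj; rewrite /g in H.
  have E : \sum_i f j.+1 i * c' i = f j.+1 i0 * r^-1 * s.
    apply/eqP; rewrite -subr_eq0 /s mulr_sumr -sumrB; apply/eqP; rewrite -[RHS]H.
    by apply: eq_bigr => i _; rewrite mulrBl !mulrA.
  by rewrite E /t !mulrN mulrA subrr.
rewrite negb_exists => /forallP H0.
have hS' : (N < #|S|)%N by apply: ltnW.
have [c [Hnz [Hsupp Heq]]] := IH (fun j => f j.+1) _ hS'.
exists c; split=> //; split=> // -[|j] Hj; last by apply: Heq.
rewrite big1 // => i _.
case: (boolP (i \in S)) => Hi; last by rewrite Hsupp // mulr0.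
by move: (H0 i); rewrite Hi /= negbK => /eqP ->; rewrite mul0r.
Qed.
End LA.
Section Dep.
Variable D : unitRingType.
Hypothesis divD : is_division_ring D.
Variables (a : D) (p : {poly D}).
Hypotheses (pnz : p != 0) (pc : forall i, central p`_i) (pa : p.[a] = 0).
Let n := (size p).-1.
Variable m : nat.
Variable e : 'I_m -> D.

Definition Pc (c : 'I_m -> D) := forall k, \sum_i e i * a ^+ k * c i = 0.

Lemma npos : (0 < n)%N.
Proof.
rewrite lt0n; apply/negP => /eqP n0.
have szp : size p = 1%N by rewrite -n0 /n prednK // lt0n size_poly_eq0.
move: pa; rewrite horner_coef szp big_ord1 expr0 mulr1 => /eqP.
have -> : p`_(@ord0 0) = lead_coef p by rewrite lead_coefE szp.
by rewrite lead_coef_eq0 (negPf pnz).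
Qed.

Lemma powers (c : 'I_m -> D) :
  (forall k, (k < n)%N -> \sum_i e i * a ^+ k * c i = 0) -> Pc c.
Proof.
move=> H k0.
suff: forall K k, (k <= K)%N -> \sum_i e i * a ^+ k * c i = 0.
  by move=> /(_ k0 k0 (leqnn k0)).
elim=> [|K IH] k hk.
  case: (ltnP k n) => hkn; first by apply: H.
  by move: hk; rewrite leqn0 => /eqP E; move: hkn; rewrite E; have := npos; case: (n) => //.
case: (ltnP k n) => hkn; first by apply: H.
pose G j := \sum_i e i * a ^+ j * c i.
have -> : k = (n + (k - n))%N by rewrite subnKC.
set k' := (k - n)%N.
have szp : size p = n.+1 by rewrite /n prednK // lt0n size_poly_eq0.
have Hsum : \sum_(j < size p) p`_j * G (j + k')%N = 0.
  rewrite /G.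
  under eq_bigr do rewrite mulr_sumr.
  rewrite exchange_big /= big1 // => i _.
  have -> : \sum_(j < size p) p`_j * (e i * a ^+ (j + k') * c i)
          = e i * (p.[a] * a ^+ k') * c i.
    rewrite horner_coef mulr_suml mulr_sumr mulr_suml; apply: eq_bigr => j _.
    by rewrite exprD !mulrA (pc j (e i)) ?mulrA.
  by rewrite pa mul0r mulr0 mul0r.
move: Hsum; rewrite szp big_ord_recr /= big1 ?add0r.
  have Hu : p`_n \is a GRing.unit.
    by apply: divD; rewrite -lead_coefE lead_coef_eq0.
  by move/(congr1 (fun x => (p`_n)^-1 * x)); rewrite mulr0 mulKr.
move=> j _; rewrite /G IH ?mulr0 //.
have := ltn_ord j; move: hk hkn; rewrite /k'; lia.
Qed.

Lemma min_supp s : forall c : 'I_m -> D,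
  leq #|[set i | c i != 0]| s -> (exists i, c i != 0) -> Pc c ->
  exists c' : 'I_m -> D, (exists i, c' i != 0) /\ (forall i, c' i * a = a * c' i) /\ Pc c'.
Proof.
elim: s => [|s IH] c hs [i0 Hi0] Hc.
  have : leq 1 #|[set i | c i != 0]| by apply/card_gt0P; exists i0; rewrite inE.
  by rewrite leqNgt in hs; rewrite (negPf hs).
have Hu := divD Hi0.
pose c1 i := c i * (c i0)^-1.
have Hc1 : Pc c1.
  move=> k; rewrite /c1.
  under eq_bigr do rewrite mulrA.
  by rewrite -mulr_suml Hc mul0r.
have c1i0 : c1 i0 = 1 by rewrite /c1 mulrV.
pose d i := a * c1 i - c1 i * a.
have Hd : Pc d.
  move=> k; rewrite /d.
  have -> : \sum_i e i * a ^+ k * (a * c1 i - c1 i * a) =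
    \sum_i e i * a ^+ k.+1 * c1 i - (\sum_i e i * a ^+ k * c1 i) * a.
    rewrite mulr_suml -sumrB; apply: eq_bigr => i _.
    by rewrite mulrBr exprSr !mulrA.
  by rewrite !Hc1 mul0r subrr.
case: (classic (exists i, d i != 0)) => [Hdnz|Hd0].
  apply: (IH d) => //.
  rewrite -ltnS; apply: leq_trans hs; apply: proper_card; apply/properP; split.
    apply/subsetP => i; rewrite !inE; apply: contra => /eqP ci0.
    by rewrite /d /c1 ci0 !mul0r mulr0 subrr.
  exists i0; first by rewrite inE.
  by rewrite inE /d c1i0 mulr1 mul1r subrr eqxx.
exists c1; split; first by exists i0; rewrite c1i0 oner_neq0.
split=> // i; apply/eqP; rewrite eq_sym -subr_eq0.
have : d i == 0 by apply/negPn/negP => H; apply: Hd0; exists i.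
by [].
Qed.

Lemma dep : (n < m)%N ->
  exists c : 'I_m -> D, (exists i, c i != 0) /\ (forall i, c i * a = a * c i) /\
    \sum_i e i * c i = 0.
Proof.
move=> hm.
have hS : (n < #|[set: 'I_m]|)%N by rewrite cardsT card_ord.
have [c [Hnz [_ Heq]]] := solve_hom divD (fun k i => e i * a ^+ k) hS.
have Pc0 : Pc c by apply: powers.
have [c' [Hnz' [Hcom Hc']]] := min_supp (leqnn _) Hnz Pc0.
exists c'; split=> //; split=> //.
by have := Hc' 0%N; under eq_bigr do rewrite expr0 mulr1.
Qed.
End Dep.
Lemma nat_max (P : nat -> Prop) N : P 0%N -> (forall d, P d -> (d <= N)%N) ->
  exists d, P d /\ forall d', P d' -> (d' <= d)%N.
Proof.
elim: N => [|N IH] P0 HB.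
  by exists 0%N; split=> // d' /HB.
case: (classic (P N.+1)) => HN; first by exists N.+1.
apply: IH => // d Pd; have := HB d Pd; rewrite leq_eqVlt => /orP [/eqP E|//].
by rewrite E in Pd.
Qed.

Section Sub.
Variable D : pzRingType.
Variable T : D -> Prop.
Hypothesis HT : is_subring T.
Lemma sub0 : T 0. Proof. by case: HT => H1 HB _; rewrite -(subrr 1); apply: HB. Qed.
Lemma subN x : T x -> T (- x).
Proof. by case: HT => H1 HB _ Hx; rewrite -sub0r; apply: HB => //; apply: sub0. Qed.
Lemma subD x y : T x -> T y -> T (x + y).
Proof. by case: HT => H1 HB _ Hx Hy; rewrite -(opprK y); apply: HB => //; apply: subN. Qed.
Lemma subM x y : T x -> T y -> T (x * y).
Proof. by case: HT => _ _ HM; apply: HM. Qed.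
Lemma subsum m (F : 'I_m -> D) : (forall i, T (F i)) -> T (\sum_i F i).
Proof.
move=> HF; apply: (big_ind T) => //; [exact: sub0|exact: subD].
Qed.
End Sub.

Section Main.
Variable D : unitRingType.
Hypothesis divD : is_division_ring D.
Variables (a : D) (p : {poly D}).
Hypotheses (pnz : p != 0) (pc : forall i, central p`_i) (pa : p.[a] = 0).
Variable y : D.
Hypothesis ay : a * y <> y * a.
Let n := (size p).-1.

Definition K (x : D) := x * a = a * x.

Lemma K_subring : is_subring K.
Proof.
split; rewrite /K.
- by rewrite mul1r mulr1.
- by move=> u v Hu Hv; rewrite mulrBl mulrBr Hu Hv.
- by move=> u v Hu Hv; rewrite -mulrA Hv mulrA Hu mulrA.
Qed.

Lemma K_proper : proper_subring K.
Proof. split; first exact: K_subring. by exists y; rewrite /K => E; apply: ay. Qed.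

Lemma K_inv x : K x -> K x^-1.
Proof.
rewrite /K => Hx.
case: (boolP (x \is a GRing.unit)) => Hu; last by rewrite invr_out.
apply: (mulrI Hu); rewrite mulrA mulrV // mul1r mulrA Hx mulrK //.
Qed.

Definition indep (T : D -> Prop) m (e : 'I_m -> D) :=
  (forall i, T (e i)) /\ forall c : 'I_m -> D, (forall i, K (c i)) ->
    \sum_i e i * c i = 0 -> forall i, c i = 0.

Definition good d := exists T, proper_subring T /\ (forall x, K x -> T x) /\
  exists e : 'I_d -> D, indep T e.

Lemma good0 : good 0.
Proof.
exists K; split; first exact: K_proper; split=> //.
by exists (fun _ => 0); split; [move=> i; rewrite /K mul0r mulr0 | move=> c _ _ []].
Qed.

Lemma good_le d : good d -> (d <= n)%N.
Proof.
move=> [T [_ [_ [e [_ Hi]]]]].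
rewrite leqNgt; apply/negP => hd.
have [c [[i Hci] [Hcom Hs]]] := dep divD pnz pc pa e hd.
by move: Hci; rewrite (Hi c Hcom Hs i) eqxx.
Qed.

Lemma widen_lift d (j : 'I_d) : widen_ord (leqnSn d) j = lift ord_max j.
Proof. apply: val_inj; by rewrite [RHS]lift_max. Qed.

Lemma exists_max : exists S : D -> Prop, maximal_subring S.
Proof.
have [d [[T [PT [KT [e [eT ei]]]]] dmax]] := nat_max good0 good_le.
exists T; split=> // T' PT' TT' x T'x.
apply: NNPP => Tx.
suff : good d.+1 by move/dmax; rewrite ltnn.
pose e' (i : 'I_d.+1) := if unlift ord_max i is Some j then e j else x.
exists T'; split=> //; split; first by move=> z /KT /TT'.
exists e'; split.
  by move=> i; rewrite /e'; case: unliftP => [j _|_] //; apply: TT'.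
move=> c Kc.
rewrite big_ord_recr /=.
under eq_bigr do rewrite widen_lift /e' liftK.
rewrite /e' unlift_none => Hs.
have HT := PT.1.
case: (boolP (c ord_max == 0)) => [/eqP cm0|cmnz].
  move: Hs; rewrite cm0 mulr0 addr0 => Hs.
  have H0 := ei (fun j => c (lift ord_max j)) (fun j => Kc _) Hs.
  by move=> i; case: (unliftP ord_max i) => [j ->|->] //; apply: H0.
exfalso; apply: Tx.
have Hu := divD cmnz.
have -> : x = - (\sum_(j < d) e j * c (lift ord_max j)) * (c ord_max)^-1.
  apply: (mulIr Hu); rewrite mulrVK //.
  by apply/eqP; rewrite -addr_eq0 addrC Hs.
apply: subM => //; last by apply: KT; apply: K_inv.
apply: subN => //; apply: subsum => // j; apply: subM => //; exact: KT.
Qed.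
End Main.

Theorem corollary2p11 (D : unitRingType) :
  is_division_ring D -> algebraic_over_center D ->
  (has_no_maximal_subrings D <->
   ((forall x : D, central x) /\ has_no_maximal_subrings D)).
Proof.
move=> divD alg; split; last by case.
move=> H; split=> //.
move=> x; apply: NNPP => Hx; apply: H.
have [y Hy] := not_all_ex_not _ _ Hx.
have [p [pnz [pc pa]]] := alg x.
exact: (exists_max divD pnz pc pa Hy).
Qed.
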